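(* Let $m\in\mathbb{N}$, $m\geq2$, and $T:[0,1)\to[0,1)$, $T(x)=mx\bmod1$. Let $A\subset[0,1)$ be a nowhere dense set with $T(A)\subset A$. Then for every $t\in(0,1)$ that is normal in base $m$ and every integer $i\neq0$, $$A+it\subset\mathbb{Q}^c\quad\text{and}\quad \frac{A}{it}\subset\mathbb{Q}^c.$$
   Context: An $m$-adic expansion of $t\in(0,1)$ is a sequence $(t_k)\in\{0,\dots,m-1\}^{\mathbb{N}}$ with $t=\sum_{k\ge1}t_km^{-k}$. It is normal if for every finite nonempty word $\mathbf a$ over $\{0,\dots,m-1\}$, the limiting frequency of occurrences of $\mathbf a$ as a subword of $(t_k)$ equals $m^{-|\mathbf a|}$, where $|\mathbf a|$ is the length of $\mathbf a$; $t$ is normal (in base $m$) if it has a normal $m$-adic expansion. Notation: $A+it=\{x+it:x\in A\}$, $\frac{A}{it}=\{x/(it):x\in A\setminus\{0\}\}$. $\mathbb{Q}^c$ denotes the set of irrational real numbers. *)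

(* Defs.v *)
From Stdlib Require Import Reals Lra Lia ZArith Arith List.
From Stdlib Require Export Rtopology.
Open Scope R_scope.

Definition Tmap (m : nat) (x : R) : R := frac_part (INR m * x).

Definition nowhere_dense (A : R -> Prop) : Prop :=
  forall x : R, ~ interior (adherence A) x.

Definition irrational (r : R) : Prop :=
  ~ exists p q : Z, q <> 0%Z /\ r = IZR p / IZR q.

(* d k is the digit t_{k+1}; the expansion is t = sum_{k>=0} d k / m^(k+1). *)
Definition is_madic_expansion (m : nat) (d : nat -> nat) (t : R) : Prop :=
  (forall k, (d k < m)%nat) /\
  Un_cv (fun N => sum_f_R0 (fun k => INR (d k) / INR m ^ (S k)) N) t.

Definition occurs_at (d : nat -> nat) (a : list nat) (i : nat) : bool :=
  forallb (fun j => Nat.eqb (d (i + j)%nat) (nth j a 0%nat)) (seq 0 (length a)).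

Definition occ_count (d : nat -> nat) (a : list nat) (N : nat) : nat :=
  length (filter (occurs_at d a) (seq 0 N)).

Definition normal_seq (m : nat) (d : nat -> nat) : Prop :=
  forall a : list nat, a <> nil -> Forall (fun x => (x < m)%nat) a ->
    Un_cv (fun N => INR (occ_count d a N) / INR N) (/ INR m ^ length a).

Definition normal_in_base (m : nat) (t : R) : Prop :=
  exists d, is_madic_expansion m d t /\ normal_seq m d.

(* Main.v *)
Require Import Defs.
From Stdlib Require Import Reals ZArith Lra Lia List.
Open Scope R_scope.

Lemma Int_part_unique (r : R) (k : Z) : IZR k <= r < IZR k + 1 -> Int_part r = k.
Proof.
  intros [H1 H2]. unfold Int_part.
  assert (k + 1 = up r)%Z as <-. { apply tech_up; rewrite plus_IZR; lra. }
  lia.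
Qed.

Lemma frac_unique (r : R) (k : Z) : IZR k <= r < IZR k + 1 -> frac_part r = r - IZR k.
Proof. intros H. unfold frac_part. rewrite (Int_part_unique r k H). reflexivity. Qed.

Lemma Int_part_bounds (r : R) : IZR (Int_part r) <= r < IZR (Int_part r) + 1.
Proof. pose proof (base_fp r) as [H1 H2]. unfold frac_part in *. lra. Qed.

Lemma frac_shift (r : R) (k : Z) : frac_part (r + IZR k) = frac_part r.
Proof.
  pose proof (Int_part_bounds r).
  rewrite (frac_unique (r + IZR k) (Int_part r + k)); [|rewrite plus_IZR; lra].
  unfold frac_part. rewrite plus_IZR. ring.
Qed.

Lemma A_orbit (m : nat) (A : R -> Prop)
  (HA01 : forall x, A x -> 0 <= x < 1)
  (HAinv : forall x, A x -> A (Tmap m x)) x :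
  A x -> forall n, A (frac_part (INR m ^ n * x)).
Proof.
  intros Ax n. induction n as [|n IH].
  - simpl. rewrite Rmult_1_l. rewrite (frac_unique x 0); [|specialize (HA01 x Ax); simpl; lra].
    replace (x - IZR 0) with x by (simpl; ring). exact Ax.
  - apply HAinv in IH. unfold Tmap in IH.
    unfold frac_part at 2 in IH.
    replace (INR m * (INR m ^ n * x - IZR (Int_part (INR m ^ n * x))))
      with (INR m ^ S n * x + IZR (- (Z.of_nat m * Int_part (INR m ^ n * x)))) in IH.
    + rewrite frac_shift in IH. exact IH.
    + rewrite opp_IZR, mult_IZR, <- INR_IZR_INZ. simpl. ring.
Qed.


Lemma forallb_map' {A B} (f : B -> bool) (g : A -> B) l : forallb f (map g l) = forallb (fun x => f (g x)) l.
Proof. induction l; simpl; congruence. Qed.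
Lemma forallb_ext' {A} (f g : A -> bool) l : (forall x, f x = g x) -> forallb f l = forallb g l.
Proof. intros H; induction l; simpl; congruence. Qed.
Lemma occ_cons d a w n : occurs_at d (a :: w) n = (Nat.eqb (d n) a && occurs_at d w (S n))%bool.
Proof.
  unfold occurs_at. simpl. rewrite Nat.add_0_r. f_equal.
  rewrite <- seq_shift, forallb_map'. apply forallb_ext'. intros j. simpl.
  rewrite Nat.add_succ_r. reflexivity.
Qed.

Section Digits.
Variable m : nat.
Hypothesis Hm : (2 <= m)%nat.
Variable d : nat -> nat.
Hypothesis Hd : forall k, (d k < m)%nat.

Fixpoint ps (N : nat) : R :=
  match N with O => 0 | S N => ps N + INR (d N) / INR m ^ S N end.

Lemma INRm_gt1 : 1 < INR m.
Proof. apply (lt_INR 1 m). lia. Qed.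

Lemma pow_pos' n : 0 < INR m ^ n.
Proof. apply pow_lt. pose proof INRm_gt1. lra. Qed.

Lemma dig_le k : 0 <= INR (d k) <= INR m - 1.
Proof.
  split. apply pos_INR. specialize (Hd k).
  assert (INR (S (d k)) <= INR m) by (apply le_INR; lia). rewrite S_INR in H. lra.
Qed.

Lemma ps_step N : ps (S N) = ps N + INR (d N) / INR m ^ S N.
Proof. reflexivity. Qed.

Lemma ps_mono N n : ps N <= ps (N + n) <= ps N + / INR m ^ N - / INR m ^ (N + n).
Proof.
  induction n as [|n IH].
  - rewrite Nat.add_0_r. lra.
  - rewrite Nat.add_succ_r, ps_step.
    pose proof (dig_le (N + n)). pose proof (pow_pos' (N+n)).
    assert (0 <= INR (d (N + n)) / INR m ^ S (N + n)).
    { unfold Rdiv; apply Rmult_le_pos; [lra| left; apply Rinv_0_lt_compat, pow_pos']. }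
    assert (INR (d (N + n)) / INR m ^ S (N + n) <= / INR m ^ (N + n) - / INR m ^ S (N + n)).
    { simpl. pose proof INRm_gt1. unfold Rdiv.
      replace (/ INR m ^ (N + n) - / (INR m * INR m ^ (N + n)))
        with ((INR m - 1) * / (INR m * INR m ^ (N + n))) by (field; lra).
      apply Rmult_le_compat_r; [|lra]. left. apply Rinv_0_lt_compat. nra. }
    lra.
Qed.

Lemma ps_int N : exists z, INR m ^ N * ps N = IZR z.
Proof.
  induction N as [|N [z Hz]].
  - exists 0%Z. simpl. ring.
  - exists (Z.of_nat m * z + Z.of_nat (d N))%Z.
    rewrite ps_step, plus_IZR, mult_IZR, <- !INR_IZR_INZ, <- Hz.
    pose proof (pow_pos' N). pose proof INRm_gt1. simpl. field. lra.
Qed.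

Variable t : R.
Hypothesis Ht : Un_cv (fun N => sum_f_R0 (fun k => INR (d k) / INR m ^ (S k)) N) t.

Lemma sum_ps N : sum_f_R0 (fun k => INR (d k) / INR m ^ (S k)) N = ps (S N).
Proof. induction N; simpl in *. ring. rewrite IHN. reflexivity. Qed.

Lemma t_bounds N : ps N <= t <= ps N + / INR m ^ N.
Proof.
  split.
  - destruct (Rle_or_lt (ps N) t) as [h|h]; [exact h|exfalso].
    destruct (Ht (ps N - t)) as [K HK]; [lra|].
    specialize (HK (K + N)%nat ltac:(lia)). rewrite sum_ps in HK.
    unfold Rdist in HK. pose proof (ps_mono N (S (K + N) - N)) as [h1 _].
    replace (N + (S (K + N) - N))%nat with (S (K + N)) in h1 by lia.
    apply Rabs_def2 in HK. lra.
  - destruct (Rle_or_lt t (ps N + / INR m ^ N)) as [h|h]; [exact h|exfalso].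
    destruct (Ht (t - (ps N + / INR m ^ N))) as [K HK]; [lra|].
    specialize (HK (K + N)%nat ltac:(lia)). rewrite sum_ps in HK.
    unfold Rdist in HK. pose proof (ps_mono N (S (K + N) - N)) as [_ h1].
    replace (N + (S (K + N) - N))%nat with (S (K + N)) in h1 by lia.
    pose proof (pow_pos' (S (K+N))).
    assert (0 < / INR m ^ S (K + N)) by (apply Rinv_0_lt_compat; lra).
    apply Rabs_def2 in HK. lra.
Qed.


Fixpoint wordval (w : list nat) : R :=
  match w with nil => 0 | a :: w => (INR a + wordval w) / INR m end.

Lemma occ_val w : forall n, occurs_at d w n = true ->
  INR m ^ n * (ps (n + length w) - ps n) = wordval w.
Proof.
  induction w as [|a w IH]; intros n H.
  - simpl. rewrite Nat.add_0_r. ring.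
  - rewrite occ_cons in H. apply andb_prop in H as [H1 H2].
    apply Nat.eqb_eq in H1. specialize (IH _ H2).
    simpl length. rewrite Nat.add_succ_r.
    replace (S (n + length w)) with (S n + length w)%nat by lia.
    simpl wordval. rewrite <- IH. rewrite ps_step. subst a.
    pose proof (pow_pos' n). pose proof INRm_gt1. simpl. pose proof (pow_pos' (n + length w)). field; repeat split; lra.
Qed.

Fixpoint digs (L : nat) (c : R) : list nat :=
  match L with
  | O => nil
  | S L => Z.to_nat (Int_part (INR m * c)) :: digs L (frac_part (INR m * c))
  end.

Lemma digs_spec L : forall c, 0 <= c < 1 ->
  Forall (fun x => (x < m)%nat) (digs L c) /\ length (digs L c) = L /\
  wordval (digs L c) <= c < wordval (digs L c) + / INR m ^ L.
Proof.
  induction L as [|L IH]; intros c Hc.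
  - simpl. repeat split; auto. lra. lra.
  - pose proof INRm_gt1.
    pose proof (base_fp (INR m * c)) as [f1 f2].
    destruct (IH (frac_part (INR m * c)) ltac:(lra)) as (IH1 & IH2 & IH3 & IH4).
    pose proof (Int_part_bounds (INR m * c)) as [b1 b2].
    assert (Hk0 : (0 <= Int_part (INR m * c))%Z).
    { assert (0 <= INR m * c) by nra. assert (-1 < Int_part (INR m * c))%Z by (apply lt_IZR; simpl; lra). lia. }
    assert (Hk1 : (Int_part (INR m * c) < Z.of_nat m)%Z).
    { apply lt_IZR. rewrite <- INR_IZR_INZ. assert (INR m * c < INR m) by nra. lra. }
    assert (HI : INR (Z.to_nat (Int_part (INR m * c))) = IZR (Int_part (INR m * c))).
    { rewrite INR_IZR_INZ, Z2Nat.id; auto. }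
    simpl digs. simpl wordval. simpl length. repeat split.
    + constructor; auto. lia.
    + rewrite IH2. reflexivity.
    + rewrite HI. assert (Hc' : frac_part (INR m * c) = INR m * c - IZR (Int_part (INR m * c))) by reflexivity. apply (Rmult_le_reg_l (INR m)); [lra|]. field_simplify; [|lra]. lra.
    + rewrite HI. assert (Hc' : frac_part (INR m * c) = INR m * c - IZR (Int_part (INR m * c))) by reflexivity.
      pose proof (pow_pos' L).
      apply (Rmult_lt_reg_l (INR m)); [lra|]. simpl.
      replace (INR m * ((IZR (Int_part (INR m * c)) + wordval (digs L (frac_part (INR m * c)))) / INR m +
       / (INR m * INR m ^ L))) with
        (IZR (Int_part (INR m * c)) + wordval (digs L (frac_part (INR m * c))) + / INR m ^ L)
        by (field; lra).
      lra.
Qed.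

Lemma occurs_exists : normal_seq m d -> forall w, w <> nil -> Forall (fun x => (x < m)%nat) w ->
  exists n, occurs_at d w n = true.
Proof.
  intros Hn w Hw Hf. specialize (Hn w Hw Hf).
  pose proof (pow_pos' (length w)).
  destruct (Hn (/ INR m ^ length w)) as [N HN]. { apply Rlt_gt, Rinv_0_lt_compat; lra. }
  specialize (HN (S N) ltac:(lia)). unfold occ_count in HN.
  destruct (filter (occurs_at d w) (seq 0 (S N))) as [|n l] eqn:E.
  - exfalso. simpl in HN. unfold Rdist in HN. unfold Rdiv in HN. rewrite Rmult_0_l in HN.
    rewrite Rminus_0_l, Rabs_Ropp, Rabs_right in HN; [lra|].
    left; apply Rinv_0_lt_compat; lra.
  - exists n. assert (In n (filter (occurs_at d w) (seq 0 (S N)))) by (rewrite E; left; auto).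
    apply filter_In in H0. tauto.
Qed.

Lemma pow_large M : exists L, M < INR m ^ L.
Proof.
  assert (Hb : forall L, INR L + 1 <= INR m ^ L).
  { induction L. simpl. lra. rewrite S_INR. simpl. assert (2 <= INR m) by (apply (le_INR 2 m); lia).
    pose proof (pos_INR L). nra. }
  destruct (INR_archimed 1 M) as [L HL]; [lra|]. exists L. specialize (Hb L). lra.
Qed.

Lemma density : normal_seq m d -> forall a b, 0 <= a < b -> b < 1 ->
  exists n, a <= frac_part (INR m ^ n * t) <= b.
Proof.
  intros Hn a b Hab Hb1.
  destruct (pow_large (2 / (b - a))) as [L HL].
  pose proof INRm_gt1. pose proof (pow_pos' L).
  assert (HL' : / INR m ^ L < (b - a) / 2).
  { apply (Rmult_lt_reg_l (INR m ^ L)); [lra|]. rewrite Rinv_r by lra.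
    apply (Rmult_lt_reg_r (2 / (b - a))). { unfold Rdiv. apply Rmult_lt_0_compat; [lra|apply Rinv_0_lt_compat; lra]. }
    replace (INR m ^ L * ((b - a) / 2) * (2 / (b - a))) with (INR m ^ L) by (field; lra). lra. }
  set (c := (a + b) / 2).
  destruct (digs_spec (S L) c ltac:(unfold c; lra)) as (D1 & D2 & D3 & D4).
  destruct (occurs_exists Hn (digs (S L) c) ltac:(simpl; discriminate) D1) as [n Hocc].
  exists n.
  pose proof (occ_val _ _ Hocc) as Hv. rewrite D2 in Hv.
  destruct (ps_int n) as [z Hz].
  pose proof (t_bounds (n + S L)) as [T1 T2].
  pose proof (pow_pos' n). pose proof (pow_pos' (S L)).
  assert (Hr : INR m ^ n * (/ INR m ^ (n + S L)) = / INR m ^ S L).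
  { rewrite pow_add. field. lra. }
  assert (HSL : / INR m ^ S L <= / INR m ^ L).
  { simpl. rewrite Rinv_mult. assert (0 < / INR m ^ L) by (apply Rinv_0_lt_compat; lra).
    assert (/ INR m < 1). { rewrite <- Rinv_1. apply Rinv_lt_contravar; lra. } nra. }
  set (r := INR m ^ n * (t - ps (n + S L))).
  assert (Hr0 : 0 <= r <= / INR m ^ S L).
  { unfold r. split. apply Rmult_le_pos; lra. rewrite <- Hr. apply Rmult_le_compat_l; lra. }
  assert (Heq : INR m ^ n * t = IZR z + (wordval (digs (S L) c) + r)).
  { unfold r. rewrite <- Hz, <- Hv. ring. }
  rewrite Heq, Rplus_comm, frac_shift.
  set (W := wordval (digs (S L) c)) in *. change (IZR 0) with 0. rewrite (frac_unique _ 0); change (IZR 0) with 0; unfold c in *; lra.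
Qed.

End Digits.

Lemma affine_pick (Aa B a b al be : R) : a < b -> 0 <= al < be -> be <= 1 ->
  2 <= Rabs Aa * (b - a) ->
  exists a' b' (k : Z), a <= a' < b' /\ b' <= b /\
    forall y, a' <= y <= b' -> IZR k + al < Aa * y + B < IZR k + be.
Proof.
  intros Hab Hal Hbe HA.
  set (g := (al + be) / 2). set (dl := (be - al) / 4).
  destruct (Rlt_or_le 0 Aa) as [Hp|Hn].
  - rewrite Rabs_right in HA by lra.
    set (low := Aa * a + B). pose proof (archimed low) as [k1 k2].
    set (k := up low) in *.
    set (ys := (IZR k + g - B) / Aa). set (r := dl / Aa).
    assert (E1 : Aa * ys = IZR k + g - B) by (unfold ys; field; lra).
    assert (E2 : Aa * r = dl) by (unfold r; field; lra).
    assert (r > 0) by (unfold r, dl; apply Rdiv_lt_0_compat; lra).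
    exists (ys - r), (ys + r), k. split; [|split].
    + split; [|lra]. apply (Rmult_le_reg_l Aa); [lra|].
      rewrite Rmult_minus_distr_l, E1, E2. unfold low, g, dl in *. lra.
    + apply (Rmult_le_reg_l Aa); [lra|].
      rewrite Rmult_plus_distr_l, E1, E2. unfold low, g, dl in *. lra.
    + intros y [y1 y2].
      assert (Aa * (ys - r) <= Aa * y) by (apply Rmult_le_compat_l; lra).
      assert (Aa * y <= Aa * (ys + r)) by (apply Rmult_le_compat_l; lra).
      rewrite Rmult_minus_distr_l in *. rewrite Rmult_plus_distr_l in *.
      unfold g, dl in *. lra.
  - assert (Hn' : Aa < 0).
    { destruct Hn as [h|h]; auto. subst Aa. rewrite Rabs_R0 in HA. lra. }
    rewrite Rabs_left in HA by lra.
    set (low := Aa * b + B). pose proof (archimed low) as [k1 k2].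
    set (k := up low) in *.
    set (ys := (IZR k + g - B) / Aa). set (r := - dl / Aa).
    assert (E1 : Aa * ys = IZR k + g - B) by (unfold ys; field; lra).
    assert (E2 : Aa * r = - dl) by (unfold r; field; lra).
    assert (r > 0).
    { unfold r. unfold Rdiv. rewrite <- Ropp_mult_distr_l, Ropp_mult_distr_r.
      apply Rmult_lt_0_compat. unfold dl; lra. rewrite <- Rinv_opp. apply Rinv_0_lt_compat; lra. }
    exists (ys - r), (ys + r), k. split; [|split].
    + split; [|lra]. apply Rnot_lt_le. intro Hc.
      assert (Aa * a < Aa * (ys - r)) by (apply Rmult_lt_gt_compat_neg_l; lra).
      rewrite Rmult_minus_distr_l, E1, E2 in H0. unfold low, g, dl in *. lra.
    + apply Rnot_lt_le. intro Hc.
      assert (Aa * (ys + r) < Aa * b) by (apply Rmult_lt_gt_compat_neg_l; lra).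
      rewrite Rmult_plus_distr_l, E1, E2 in H0. unfold low, g, dl in *. lra.
    + intros y [y1 y2].
      assert (Aa * y <= Aa * (ys - r)) by (apply Rmult_le_compat_neg_l; lra).
      assert (Aa * (ys + r) <= Aa * y) by (apply Rmult_le_compat_neg_l; lra).
      rewrite Rmult_minus_distr_l in *. rewrite Rmult_plus_distr_l in *.
      unfold g, dl in *. lra.
Qed.

Lemma robust (m : nat) (Hm : (2 <= m)%nat) (u v : Z) (Hu : u <> 0%Z) (Hv : (0 < v)%Z)
  (al be : R) (Hal : 0 <= al < be) (Hbe : be <= 1) :
  forall es : list Z, forall a b, a < b -> exists a' b', a <= a' < b' /\ b' <= b /\
    forall e, In e es -> forall y, a' <= y <= b' ->
      exists j : nat, al < frac_part (INR m ^ j * (IZR u * y + IZR e) / IZR v) < be.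
Proof.
  induction es as [|e es IH]; intros a b Hab.
  - exists a, b. split; [lra|split; [lra|]]. intros e [].
  - destruct (IH a b Hab) as (a1 & b1 & [Ha1 Hab1] & Hb1 & H1).
    assert (HvR : 0 < IZR v) by (apply IZR_lt; exact Hv).
    destruct (pow_large m Hm (2 * IZR v / (b1 - a1))) as [j Hj].
    assert (Hu1 : 1 <= Rabs (IZR u)).
    { rewrite <- abs_IZR. apply IZR_le. lia. }
    pose proof (pow_lt (INR m) j ltac:(apply (lt_INR 0 m); lia)) as Hpj.
    set (Aa := INR m ^ j * IZR u / IZR v). set (B := INR m ^ j * IZR e / IZR v).
    assert (HA : 2 <= Rabs Aa * (b1 - a1)).
    { unfold Aa. unfold Rdiv. rewrite !Rabs_mult, (Rabs_right (INR m ^ j)) by lra.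
      rewrite (Rabs_right (/ IZR v)) by (left; apply Rinv_0_lt_compat; lra).
      assert (2 * IZR v < INR m ^ j * (b1 - a1)).
      { apply (Rmult_lt_reg_r (/ (b1 - a1))). apply Rinv_0_lt_compat; lra.
        replace (INR m ^ j * (b1 - a1) * / (b1 - a1)) with (INR m ^ j) by (field; lra).
        exact Hj. }
      apply (Rmult_le_reg_r (IZR v)); [lra|].
      replace (INR m ^ j * Rabs (IZR u) * / IZR v * (b1 - a1) * IZR v)
        with (INR m ^ j * (b1 - a1) * Rabs (IZR u)) by (field; lra).
      assert (0 < INR m ^ j * (b1 - a1)) by (apply Rmult_lt_0_compat; lra).
      nra. }
    destruct (affine_pick Aa B a1 b1 al be Hab1 Hal Hbe HA) as (a2 & b2 & k & [Ha2 Hab2] & Hb2 & H2).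
    exists a2, b2. split; [lra|split; [lra|]].
    intros e' [<-|He'] y Hy.
    + exists j. specialize (H2 y Hy).
      assert (Eq : INR m ^ j * (IZR u * y + IZR e) / IZR v = Aa * y + B) by (unfold Aa, B; field; lra).
      rewrite Eq, (frac_unique _ k) by lra. lra.
    + apply (H1 e' He' y). lra.
Qed.

Lemma key (m : nat) (Hm : (2 <= m)%nat) (A : R -> Prop)
  (HA01 : forall x, A x -> 0 <= x < 1)
  (HAnd : nowhere_dense A)
  (HAinv : forall x, A x -> A (Tmap m x)) (t : R) (Hnt : normal_in_base m t)
  (u v s : Z) (Hu : u <> 0%Z) (Hv : (0 < v)%Z) (x : R) (Ax : A x)
  (Hx : IZR v * x = IZR u * t + IZR s) : False.
Proof.
  destruct Hnt as (d & [Hd Ht] & Hn).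
  assert (Hit : forall al be, 0 <= al < be -> be <= 1 -> exists z, A z /\ al < z < be).
  { intros al be Hal Hbe.
    set (es := map Z.of_nat (seq 0 (Z.to_nat v))).
    destruct (robust m Hm u v Hu Hv al be Hal Hbe es 0 (1/2) ltac:(lra))
      as (a' & b' & [Ha' Hab'] & Hb' & H).
    destruct (density m Hm d Hd t Ht Hn a' b' ltac:(lra) ltac:(lra)) as [n Hyn].
    set (N := Int_part (INR m ^ n * t)).
    set (mn := (Z.of_nat m ^ Z.of_nat n)%Z).
    assert (Hmn : IZR mn = INR m ^ n) by (unfold mn; rewrite <- pow_IZR, <- INR_IZR_INZ; reflexivity).
    set (c := (u * N + mn * s)%Z).
    set (e := (c mod v)%Z).
    assert (He : In e es).
    { unfold es. apply in_map_iff. exists (Z.to_nat e). split.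
      - apply Z2Nat.id. pose proof (Z_mod_lt c v ltac:(lia)). unfold e. lia.
      - apply in_seq. pose proof (Z_mod_lt c v ltac:(lia)). unfold e. lia. }
    set (yn := frac_part (INR m ^ n * t)) in *.
    destruct (H e He yn Hyn) as [j Hj].
    exists (frac_part (INR m ^ (n + j) * x)). split.
    - apply (A_orbit m A HA01 HAinv x Ax).
    - set (mj := (Z.of_nat m ^ Z.of_nat j)%Z).
      assert (Hmj : IZR mj = INR m ^ j) by (unfold mj; rewrite <- pow_IZR, <- INR_IZR_INZ; reflexivity).
      assert (Hc : c = (v * (c / v) + e)%Z) by (unfold e; apply Z.div_mod; lia).
      assert (HvR : 0 < IZR v) by (apply IZR_lt; lia).
      assert (Hyn' : yn = INR m ^ n * t - IZR N) by reflexivity.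
      assert (Eq : INR m ^ (n + j) * x =
        INR m ^ j * (IZR u * yn + IZR e) / IZR v + IZR (mj * (c / v))).
      { assert (HcR : IZR c = IZR v * IZR (c / v) + IZR e).
        { rewrite Hc at 1. rewrite plus_IZR, mult_IZR. reflexivity. }
        assert (HcR2 : IZR c = IZR u * IZR N + INR m ^ n * IZR s).
        { unfold c. rewrite plus_IZR, !mult_IZR, Hmn. reflexivity. }
        rewrite mult_IZR, Hmj, pow_add.
        apply (Rmult_eq_reg_l (IZR v)); [|lra].
        replace (IZR v * (INR m ^ n * INR m ^ j * x)) with (INR m ^ j * (INR m ^ n * (IZR v * x))) by ring.
        rewrite Hx, Hyn'.
        replace (IZR (c / v)) with ((IZR c - IZR e) / IZR v) by (rewrite HcR; field; lra).
        rewrite HcR2. field. lra. }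
      rewrite Eq, frac_shift. exact Hj. }
  apply (HAnd (1/2)).
  assert (Hd2 : 0 < 1/2) by lra.
  exists (mkposreal _ Hd2). intros y Hy. unfold disc in Hy. simpl in Hy.
  apply Rabs_def2 in Hy.
  intros V [del Hdel].
  destruct (Hit (Rmax 0 (y - del)) (Rmin 1 (y + del))) as (z & Az & Hz).
  { pose proof (cond_pos del). split. apply Rmax_l.
    unfold Rmax, Rmin; destruct Rle_dec; destruct Rle_dec; lra. }
  { apply Rmin_l. }
  exists z. split; [|exact Az]. apply Hdel. unfold disc.
  pose proof (Rmax_r 0 (y - del)). pose proof (Rmin_r 1 (y + del)).
  apply Rabs_def1; lra.
Qed.

Theorem theorem4 (m : nat) (Hm : (2 <= m)%nat) (A : R -> Prop)
  (HA01 : forall x, A x -> 0 <= x < 1)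
  (HAnd : nowhere_dense A)
  (HAinv : forall x, A x -> A (Tmap m x)) :
  forall t : R, 0 < t < 1 -> normal_in_base m t ->
  forall i : Z, i <> 0%Z ->
    (forall x, A x -> irrational (x + IZR i * t)) /\
    (forall x, A x -> x <> 0 -> irrational (x / (IZR i * t))).
Proof.
  intros t Ht Hnt i Hi. split.
  - intros x Ax [p [q [Hq Heq]]].
    apply (key m Hm A HA01 HAnd HAinv t Hnt (- (q * q * i)) (q * q) (p * q)) with (x := x); auto.
    + intro h. apply Z.eq_opp_l in h. simpl in h. apply Zmult_integral in h as [h|h]; [|lia].
      apply Zmult_integral in h as [h|h]; lia.
    + nia.
    + assert (HqR : IZR q <> 0) by (apply not_0_IZR; auto).
      rewrite opp_IZR, !mult_IZR.
      assert (x = IZR p / IZR q - IZR i * t) by lra. subst x. field. exact HqR.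
  - intros x Ax Hx0 [p [q [Hq Heq]]].
    assert (HiR : IZR i <> 0) by (apply not_0_IZR; auto).
    assert (HqR : IZR q <> 0) by (apply not_0_IZR; auto).
    assert (Hit : IZR i * t <> 0) by (apply Rmult_integral_contrapositive; split; lra).
    assert (Hxe : x = IZR p / IZR q * (IZR i * t)).
    { rewrite <- Heq. field. split; [lra|exact HiR]. }
    assert (Hp : p <> 0%Z).
    { intro h. subst p. apply Hx0. rewrite Hxe. unfold Rdiv. ring. }
    apply (key m Hm A HA01 HAnd HAinv t Hnt (p * q * i) (q * q) 0) with (x := x); auto.
    + intro h. apply Zmult_integral in h as [h|h]; [|lia].
      apply Zmult_integral in h as [h|h]; lia.
    + nia.
    + rewrite Hxe, !mult_IZR. simpl IZR. field. exact HqR.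
Qed.
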